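(* There exist a temporal graph $\mathcal{G}=(X,A)\in\mathbb{T}_{n,T,p}$ (with $T=2$, no node or edge attributes beyond edge presence) whose aggregated graph consists of two connected components, and nodes $u,v,w$ with $u,w$ in the same component, $(u,w)$ an edge at time $T$, and $v$ in the other component, such that for every node-equivariant temporal node representation $f:\mathbb{T}_{n,T,p}\to\mathbb{R}^{n\times d}$ (in particular every one in the time-and-graph or time-then-graph families built from equivariant components) one has $f(\mathcal{G})_u=f(\mathcal{G})_v$, and hence for every link-scoring function $s:\mathbb{R}^d\times\mathbb{R}^d\to\mathbb{R}$, $s(f(\mathcal{G})_u,f(\mathcal{G})_w)=s(f(\mathcal{G})_v,f(\mathcal{G})_w)$. Consequently no link predictor based on equivariant temporal node representations can correctly predict temporal links on $\mathcal{G}$.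
   Context: $\mathbb{T}_{n,T,p}=\mathbb{R}^{n\times T\times p}\times\mathbb{R}^{n\times n\times T\times p}$ is the set of temporal graphs $(X,A)$ on node set $V=\{1,\dots,n\}$ over $T$ time steps with node attributes $X_{i,t}$ and edge attributes $A_{i,j,t}$ (an edge $(i,j)$ is present at time $t$ iff $A_{i,j,t}\neq0$). The aggregated graph has an edge $\{i,j\}$ iff $A_{i,j,t}\ne0$ for some $t$. A permutation $\pi$ of $V$ acts by $(\pi X)_{\pi(i),t}=X_{i,t}$, $(\pi A)_{\pi(i),\pi(j),t}=A_{i,j,t}$, and on $Z\in\mathbb{R}^{n\times d}$ by $(\pi Z)_{\pi(i)}=Z_i$. A temporal node representation $f:\mathbb{T}_{n,T,p}\to\mathbb{R}^{n\times d}$ is node-equivariant if $f(\pi\mathcal{G})=\pi f(\mathcal{G})$ for all $\pi$ and $\mathcal{G}$. A link between $a,b$ is predicted by applying $s$ to $(f(\mathcal{G})_a,f(\mathcal{G})_b)$. *)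

(* Defs.v *)
From HB Require Import structures.
From mathcomp Require Import all_boot all_order all_algebra all_fingroup.
From mathcomp Require Import reals.
Set Implicit Arguments. Unset Strict Implicit. Unset Printing Implicit Defensive.
Import Order.TTheory GRing.Theory Num.Theory.
Local Open Scope ring_scope.

(* Temporal graphs T_{n,T,p}: node attributes X_{i,t} in R^p and edge
   attributes A_{i,j,t} in R^p. *)
Definition tgraph (R : realType) (n T p : nat) : Type :=
  (('I_n -> 'I_T -> 'rV[R]_p) * ('I_n -> 'I_n -> 'I_T -> 'rV[R]_p))%type.

(* Action of a permutation pi of V on a temporal graph:
   (pi X)_{pi i, t} = X_{i,t},  (pi A)_{pi i, pi j, t} = A_{i,j,t}. *)
Definition tg_act (R : realType) (n T p : nat) (pi : 'S_n)
  (G : tgraph R n T p) : tgraph R n T p :=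
  (fun i t => G.1 ((pi^-1)%g i) t,
   fun i j t => G.2 ((pi^-1)%g i) ((pi^-1)%g j) t).

(* Action on node representations Z in R^{n x d}: (pi Z)_{pi i} = Z_i. *)
Definition rep_act (R : realType) (n d : nat) (pi : 'S_n) (Z : 'M[R]_(n, d))
  : 'M[R]_(n, d) :=
  \matrix_(i < n, k < d) Z ((pi^-1)%g i) k.

Definition node_equivariant (R : realType) (n T p d : nat)
  (f : tgraph R n T p -> 'M[R]_(n, d)) : Prop :=
  forall (pi : 'S_n) (G : tgraph R n T p), f (tg_act pi G) = rep_act pi (f G).

Definition agg_rel (R : realType) (n T p : nat) (G : tgraph R n T p) : rel 'I_n :=
  fun i j => [exists t : 'I_T, (G.2 i j t != 0) || (G.2 j i t != 0)].

Definition n_components (R : realType) (n T p : nat) (G : tgraph R n T p) : nat :=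
  n_comp (agg_rel G) [pred : 'I_n | true].

(* Main.v *)
Require Import Defs.
From HB Require Import structures.
From mathcomp Require Import all_boot all_order all_algebra all_fingroup.
From mathcomp Require Import reals.
From Stdlib Require Import FunctionalExtensionality.
Import Order.TTheory GRing.Theory Num.Theory.
Local Open Scope ring_scope.

Definition e' (i j : 'I_4) : bool := (i %/ 2 == j %/ 2)%N && (i != j).
Definition ee (i j : 'I_4) (t : 'I_2) : bool := (t == ord_max) && e' i j.
Definition GG (R : realType) : tgraph R 4 2 1 :=
  (fun _ _ => 0, fun i j t => if ee i j t then const_mx 1 else 0).
Definition sf (i : 'I_4) : 'I_4 := inord ((i + 2) %% 4).

Lemma sfK : involutive sf.
Proof. by move=> i; apply: val_inj; case: i => [[|[|[|[|]]]] ?] //=; rewrite /sf /= !inordK. Qed.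

Lemma sf_inj : injective sf.
Proof. exact: inv_inj sfK. Qed.

Lemma e'_sf i j : e' (sf i) (sf j) = e' i j.
Proof.
move: i j => [[|[|[|[|m]]]] Hi] [[|[|[|[|k]]]] Hk] //;
 rewrite /e' /sf -val_eqE /= ?inordK //.
Qed.

Definition pi : 'S_4 := perm sf_inj.

Lemma e'_pi i j : e' ((pi^-1)%g i) ((pi^-1)%g j) = e' i j.
Proof.
rewrite -[in RHS](permKV pi i) -[in RHS](permKV pi j) /pi !permE.
by rewrite e'_sf.
Qed.

Lemma one_neq0 (R : realType) : (const_mx 1 : 'rV[R]_1) != 0.
Proof. by apply/eqP => /matrixP/(_ 0 0); rewrite !mxE; apply/eqP; rewrite oner_neq0. Qed.

Lemma agg_GG (R : realType) : agg_rel (GG R) =2 e'.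
Proof.
move=> i j; rewrite /agg_rel /=.
have H : forall b, ((if b then (const_mx 1 : 'rV[R]_1) else 0) != 0) = b.
  by case; rewrite ?one_neq0 ?eqxx.
apply/existsP/idP.
- case=> t; rewrite !H /ee => /orP [/andP [_ ->] //|/andP [_]].
  by rewrite /e' eq_sym => /andP [-> /=]; rewrite eq_sym.
- move=> h; exists ord_max; rewrite !H /ee eqxx /= h //.
Qed.

Lemma GG_inv (R : realType) : tg_act pi (GG R) = GG R.
Proof.
rewrite /tg_act /GG /=; congr pair.
do 3 (apply: functional_extensionality => ?).
by rewrite /ee e'_pi.
Qed.

Lemma conn_eq (R : realType) : connect (agg_rel (GG R)) =2 connect e'.
Proof. by move=> x y; apply: eq_connect; apply: agg_GG. Qed.

Lemma e'_sym : symmetric e'.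
Proof. by move=> i j; rewrite /e' eq_sym [j == i]eq_sym. Qed.

Lemma e'_csym : connect_sym e'.
Proof. exact: sym_connect_sym e'_sym. Qed.

Lemma not_conn02 : ~~ connect e' (inord 0) (inord 2).
Proof.
have key : closed e' [pred x : 'I_4 | (x < 2)%N].
  move=> x y; rewrite /e' => /andP [/eqP h _].
  by move: x y h => [[|[|[|[|m]]]] Hi] [[|[|[|[|k]]]] Hk].
apply/negP => /(closed_connect key).
by rewrite !inE !inordK.
Qed.

Lemma ncomp_e' : n_comp e' [pred : 'I_4 | true] = 2%N.
Proof.
have cl := closure_closed e'_csym (pred2 (inord 0) (inord 2)).
have m0 : (inord 0 : 'I_4) \in closure e' (pred2 (inord 0) (inord 2)).
  by apply: mem_closure; rewrite !inE eqxx.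
have m2 : (inord 2 : 'I_4) \in closure e' (pred2 (inord 0) (inord 2)).
  by apply: mem_closure; rewrite !inE eqxx orbT.
rewrite (eq_n_comp_r (a' := closure e' (pred2 (inord 0) (inord 2)))).
  rewrite n_comp_closure2 //; last exact: e'_csym.
  by rewrite not_conn02.
move=> z; rewrite [in LHS]inE /=; symmetry; apply/idP.
move: z => [[|[|[|[|m]]]] Hz] //.
- by have -> : Ordinal Hz = inord 0 by apply: val_inj; rewrite /= inordK.
- have -> : Ordinal Hz = inord 1 by apply: val_inj; rewrite /= inordK.
  by rewrite -(cl (inord 0)) // /e' -val_eqE /= !inordK.
- by have -> : Ordinal Hz = inord 2 by apply: val_inj; rewrite /= inordK.
- have -> : Ordinal Hz = inord 3 by apply: val_inj; rewrite /= inordK.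
  by rewrite -(cl (inord 2)) // /e' -val_eqE /= !inordK.
Qed.

Theorem theorem2 (R : realType) :
  exists (n : nat) (G : tgraph R n 2 1) (u v w : 'I_n),
    (* no node attributes, edge attributes only encode presence (0 or 1) *)
    (forall i t, G.1 i t = 0) /\
    (forall i j t, G.2 i j t = 0 \/ G.2 i j t = const_mx 1) /\
    (* aggregated graph has exactly two connected components *)
    n_components G = 2%N /\
    (* u, w in the same component, (u,w) an edge at the last time step T = 2 *)
    connect (agg_rel G) u w /\ u != w /\ G.2 u w ord_max != 0 /\
    (* v in the other component *)
    ~~ connect (agg_rel G) u v /\
    forall (d : nat) (f : tgraph R n 2 1 -> 'M[R]_(n, d)),
      node_equivariant f ->
      row u (f G) = row v (f G) /\
      (forall s : 'rV[R]_d -> 'rV[R]_d -> R,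
          s (row u (f G)) (row w (f G)) = s (row v (f G)) (row w (f G))).
Proof.
exists 4%N, (GG R), (inord 0), (inord 2), (inord 1).
have ruv : forall d (f : tgraph R 4 2 1 -> 'M[R]_(4, d)), node_equivariant f ->
    row (inord 0) (f (GG R)) = row (inord 2) (f (GG R)).
  move=> d f hf; have := hf pi (GG R); rewrite GG_inv => E.
  apply/rowP => k; rewrite {1}E !mxE.
  have -> : (inord 0 : 'I_4) = pi (inord 2).
    by rewrite permE; apply: val_inj; rewrite /= !inordK.
  by rewrite permK.
split; first by [].
split; first by move=> i j t /=; case: ee; [right|left].
split.
  by rewrite /n_components (eq_n_comp (@conn_eq R)) ncomp_e'.
split; first by rewrite conn_eq; apply: connect1; rewrite /e' -val_eqE /= !inordK.
split; first by apply/eqP => /(congr1 val); rewrite /= !inordK.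
split.
  have h : ee (inord 0) (inord 1) ord_max by rewrite /ee eqxx /e' -val_eqE /= !inordK.
  change ((if ee (inord 0) (inord 1) ord_max then (const_mx 1 : 'rV[R]_1) else 0) != 0).
  by rewrite h; exact: one_neq0.
split; first by rewrite conn_eq not_conn02.
move=> d f hf; split; first exact: ruv.
by move=> s; rewrite (ruv d f hf).
Qed.
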